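(* Let $P_M=\frac{1}{2M}\sum_{i=1}^N\frac{\sigma_n^2d_i^\alpha}{\sigma_{v,i}^2}$. (a) For every $M\ge1$, $\mathrm{MSE}^{(M)}(P_M)\le\dfrac{1}{\sigma_\theta^{-2}+\frac13\sum_{i=1}^N\sigma_{v,i}^{-2}}$. (b) For every $\mathbf{h}$ with all entries nonzero and every $M\ge1$, $\dfrac{\sigma_\theta^2}{1+\zeta_M}\le\mathrm{MSE}_s(P_M;\mathbf{h})<\sigma_\theta^2$, where $\zeta_M=\frac{\mathbf{h}^H\mathbf{h}}{2M}\sum_{i=1}^N\frac{\sigma_\theta^2d_i^\alpha}{\sigma_{v,i}^2}$; if $\mathbf{h}$ has independent entries $h_i\sim\mathcal{CN}(0,d_i^{-\alpha})$ then $\zeta_M\to0$ in probability as $M\to\infty$. (c) For every $M$, $P>0$ and $\mathbf{h}$ with nonzero entries, both $\mathrm{MSE}^{(M)}(P)$ and $\mathrm{MSE}_s(P;\mathbf{h})$ are at least $\dfrac{1}{\sigma_\theta^{-2}+\sum_{i=1}^N\sigma_{v,i}^{-2}}$, are nonincreasing in $P$, and converge to this value as $P\to\infty$.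
   Context: Constants: $\sigma_\theta^2,\sigma_n^2>0$, $\sigma_{v,i}^2>0$, $d_i>0$, $\alpha>0$; $\mathbf{V}=\mathrm{diag}\{\sigma_{v,i}^2\}$. The LMMSE estimator of $\theta\sim\mathcal{CN}(0,\sigma_\theta^2)$ has mean squared error $1/(\sigma_\theta^{-2}+\text{SNR})$ in the multi-antenna case and $\sigma_\theta^2/(1+\text{SNR})$ in the single-antenna case. Multi-antenna (large-$M$): $g_M(x)=\sum_{i=1}^N\frac{Mx_i}{\sigma_n^2d_i^\alpha+\sigma_{v,i}^2Mx_i}$ for $x\in[0,\infty)^N$, $G_M(P)=\max\{g_M(x):x\ge0,\sum_ix_i=P\}$, $\mathrm{MSE}^{(M)}(P)=1/(\sigma_\theta^{-2}+G_M(P))$. Single-antenna: for $\mathbf{h}\in\mathbb{C}^N$, $\mathbf{F}=\mathrm{diag}\{h_i\}$, $\rho(\mathbf{a})=\frac{\sigma_\theta^2\mathbf{a}^H\mathbf{h}\mathbf{h}^H\mathbf{a}}{\mathbf{a}^H\mathbf{F}\mathbf{V}\mathbf{F}^H\mathbf{a}+\sigma_n^2}$, $S(P;\mathbf{h})=\max\{\rho(\mathbf{a}):\mathbf{a}^H\mathbf{a}=P\}$, and $\mathrm{MSE}_s(P;\mathbf{h})=\sigma_\theta^2/(1+S(P;\mathbf{h}))$. *)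

(* Defs.v *)
From Stdlib Require Import Reals Lra ClassicalEpsilon.
Open Scope R_scope.

(* Finite sum over indices 0..n-1 (sensor i = 1..N of the paper is index i-1). *)
Fixpoint rsum (n : nat) (f : nat -> R) : R :=
  match n with
  | O => 0
  | S k => rsum k f + f k
  end.

(* Supremum of a set of reals (least upper bound), chosen classically;
   0 if the set has no least upper bound. *)
Definition Rsup (E : R -> Prop) : R :=
  match excluded_middle_informative (exists m, is_lub E m) with
  | left H => proj1_sig (constructive_indefinite_description _ H)
  | right _ => 0
  end.

(* Complex numbers as pairs (real part, imaginary part). *)
Definition Cpx := (R * R)%type.
Definition Cnorm2 (z : Cpx) : R := fst z * fst z + snd z * snd z.
Definition Cnz (z : Cpx) : Prop := z <> (0, 0).
Definition Cconjmul (u v : Cpx) : Cpx :=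
  (fst u * fst v + snd u * snd v, fst u * snd v - snd u * fst v).
Definition Cinner (N : nat) (u v : nat -> Cpx) : Cpx :=
  (rsum N (fun i => fst (Cconjmul (u i) (v i))),
   rsum N (fun i => snd (Cconjmul (u i) (v i)))).

Section Model.
Variables (sth sn alpha : R) (N : nat) (sv d : nat -> R).
(* sth = sigma_theta^2, sn = sigma_n^2, sv i = sigma_{v,i}^2, d i = d_i *)

Definition gM (M : nat) (x : nat -> R) : R :=
  rsum N (fun i => INR M * x i /
                   (sn * Rpower (d i) alpha + sv i * INR M * x i)).

Definition GM (M : nat) (P : R) : R :=
  Rsup (fun y => exists x : nat -> R,
          (forall i, (i < N)%nat -> 0 <= x i) /\ rsum N x = P /\ y = gM M x).

Definition MSE_M (M : nat) (P : R) : R := 1 / (/ sth + GM M P).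

(* rho(a) = sth a^H h h^H a / (a^H F V F^H a + sn), with a^H h h^H a = |h^H a|^2
   and a^H F V F^H a = sum_i |a_i|^2 |h_i|^2 sigma_{v,i}^2. *)
Definition rho (h a : nat -> Cpx) : R :=
  sth * Cnorm2 (Cinner N h a) /
  (rsum N (fun i => Cnorm2 (a i) * Cnorm2 (h i) * sv i) + sn).

Definition Ssnr (P : R) (h : nat -> Cpx) : R :=
  Rsup (fun y => exists a : nat -> Cpx,
          rsum N (fun i => Cnorm2 (a i)) = P /\ y = rho h a).

Definition MSE_s (P : R) (h : nat -> Cpx) : R := sth / (1 + Ssnr P h).

Definition PM (M : nat) : R :=
  1 / (2 * INR M) * rsum N (fun i => sn * Rpower (d i) alpha / sv i).

Definition zetaM (M : nat) (h : nat -> Cpx) : R :=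
  rsum N (fun i => Cnorm2 (h i)) / (2 * INR M) *
  rsum N (fun i => sth * Rpower (d i) alpha / sv i).

Definition MSE_floor : R := 1 / (/ sth + rsum N (fun i => / sv i)).

End Model.

(* Main.v *)
Require Import Defs.
From Stdlib Require Import Reals Lra Lia Psatz ClassicalEpsilon.
Open Scope R_scope.

Lemma rsum_ext n f g : (forall i, (i < n)%nat -> f i = g i) -> rsum n f = rsum n g.
Proof. induction n as [|n IH]; intros H; cbn [rsum]; auto.
  rewrite IH by (intros; apply H; lia). rewrite H by lia. reflexivity. Qed.

Lemma rsum_le n f g : (forall i, (i < n)%nat -> f i <= g i) -> rsum n f <= rsum n g.
Proof. induction n as [|n IH]; intros H; cbn [rsum]. lra.
  assert (rsum n f <= rsum n g) by (apply IH; intros; apply H; lia).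
  specialize (H n ltac:(lia)). lra. Qed.

Lemma rsum_lt n f g : (1 <= n)%nat -> (forall i, (i < n)%nat -> f i < g i) -> rsum n f < rsum n g.
Proof. destruct n as [|n]. lia. intros _ H. cbn [rsum].
  assert (rsum n f <= rsum n g) by (apply rsum_le; intros; apply Rlt_le, H; lia).
  specialize (H n ltac:(lia)). lra. Qed.

Lemma rsum_nonneg n f : (forall i, (i < n)%nat -> 0 <= f i) -> 0 <= rsum n f.
Proof. induction n as [|n IH]; intros H; cbn [rsum]. lra.
  assert (0 <= rsum n f) by (apply IH; intros; apply H; lia).
  specialize (H n ltac:(lia)). lra. Qed.

Lemma rsum_pos n f : (1 <= n)%nat -> (forall i, (i < n)%nat -> 0 < f i) -> 0 < rsum n f.
Proof. destruct n as [|n]. lia. intros _ H. cbn [rsum].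
  assert (0 <= rsum n f) by (apply rsum_nonneg; intros; apply Rlt_le, H; lia).
  specialize (H n ltac:(lia)). lra. Qed.

Lemma rsum_scal n c f : rsum n (fun i => c * f i) = c * rsum n f.
Proof. induction n as [|n IH]; cbn [rsum]. ring. rewrite IH; ring. Qed.

Lemma rsum_plus n f g : rsum n (fun i => f i + g i) = rsum n f + rsum n g.
Proof. induction n as [|n IH]; cbn [rsum]. ring. rewrite IH; ring. Qed.

Lemma rsum_minus n f g : rsum n (fun i => f i - g i) = rsum n f - rsum n g.
Proof. induction n as [|n IH]; cbn [rsum]. ring. rewrite IH; ring. Qed.

Lemma rsum_const n c : rsum n (fun _ => c) = INR n * c.
Proof. induction n as [|n IH]. cbn [rsum INR]. ring. rewrite S_INR. cbn [rsum]. rewrite IH. ring. Qed.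

Lemma divpos a b : 0 <= a -> 0 < b -> 0 <= a / b.
Proof. intros. unfold Rdiv. apply Rmult_le_pos; [lra|left; apply Rinv_0_lt_compat; lra]. Qed.

Lemma divspos a b : 0 < a -> 0 < b -> 0 < a / b.
Proof. intros. unfold Rdiv. apply Rmult_lt_0_compat; [lra|apply Rinv_0_lt_compat; lra]. Qed.

Lemma div_le a b a' b' : 0 < b -> 0 < b' -> a * b' <= a' * b -> a / b <= a' / b'.
Proof. intros Hb Hb' H.
  assert (E1: a / b = (a * b') * / (b * b')) by (field; lra).
  assert (E2: a' / b' = (a' * b) * / (b * b')) by (field; lra).
  rewrite E1, E2. apply Rmult_le_compat_r; [left; apply Rinv_0_lt_compat; nra| auto]. Qed.

Lemma cs_real n x w : (forall i, (i < n)%nat -> 0 < w i) ->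
  (rsum n x)^2 <= rsum n (fun i => x i ^2 / w i) * rsum n w.
Proof.
  induction n as [|n IH]; intros Hw; cbn [rsum]. lra.
  set (A := rsum n x). set (B := rsum n (fun i => x i^2/w i)). set (C := rsum n w).
  assert (HA : A^2 <= B*C) by (apply IH; intros; apply Hw; lia).
  assert (HB : 0 <= B) by (apply rsum_nonneg; intros i Hi; apply divpos; [nra| apply Hw; lia]).
  assert (HC : 0 <= C) by (apply rsum_nonneg; intros i Hi; left; apply Hw; lia).
  assert (Hv: 0 < w n) by (apply Hw; lia).
  set (y := x n). set (v := w n). fold v in Hv.
  assert (K: 0 <= B*v^2 - 2*A*y*v + y^2*C).
  { destruct (Req_dec B 0) as [E|E].
    - assert (A = 0) by (rewrite E in HA; nra). subst A. rewrite E. nra.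
    - assert (HB' : 0 < B) by lra.
      assert (0 <= B*(B*v^2 - 2*A*y*v + y^2*C)).
      { replace (B*(B*v^2 - 2*A*y*v + y^2*C)) with ((B*v - A*y)^2 + (B*C - A^2)*y^2) by ring. apply Rplus_le_le_0_compat; [apply pow2_ge_0 | apply Rmult_le_pos; [lra | apply pow2_ge_0]]. }
      nra. }
  assert (E: (B + y^2/v)*(C+v) - (A+y)^2 = (B*C - A^2) + (B*v^2 - 2*A*y*v + y^2*C)/v) by (field; lra).
  assert (0 <= (B*v^2 - 2*A*y*v + y^2*C)/v) by (apply divpos; lra).
  lra.
Qed.

Lemma cs_cpx n (z : nat -> Cpx) w : (forall i, (i<n)%nat -> 0 < w i) ->
  Cnorm2 (rsum n (fun i => fst (z i)), rsum n (fun i => snd (z i)))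
   <= rsum n (fun i => Cnorm2 (z i) / w i) * rsum n w.
Proof. intros Hw. unfold Cnorm2 at 1. cbn [fst snd].
  pose proof (cs_real n (fun i => fst (z i)) w Hw) as H1.
  pose proof (cs_real n (fun i => snd (z i)) w Hw) as H2.
  assert (E: rsum n (fun i => Cnorm2 (z i)/w i) = rsum n (fun i => fst (z i)^2/w i) + rsum n (fun i => snd (z i)^2/w i)).
  { rewrite <- rsum_plus. apply rsum_ext. intros i Hi. unfold Cnorm2. field. specialize (Hw i Hi); lra. }
  rewrite E. rewrite Rmult_plus_distr_r. nra.
Qed.

Lemma Rsup_lub (E : R -> Prop) y0 b : E y0 -> (forall y, E y -> y <= b) -> is_lub E (Rsup E).
Proof.
  intros Hy Hb. unfold Rsup.
  destruct (excluded_middle_informative _) as [H|H].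
  - destruct (constructive_indefinite_description _ H) as [m Hm]. simpl. exact Hm.
  - exfalso. apply H. destruct (completeness E) as [m Hm].
    + exists b; intros y Hy'; apply Hb; auto.
    + exists y0; auto.
    + exists m; auto.
Qed.

Lemma inv_gap q G S : 0 < q -> 0 <= G -> G <= S ->
  0 <= 1/(/q+G) - 1/(/q+S) <= (S-G)*q^2.
Proof. intros Hq HG HS. assert (Hu: 0 < /q) by (apply Rinv_0_lt_compat; lra).
  replace (1/(/q+G) - 1/(/q+S)) with ((S-G) * / ((/q+G)*(/q+S))) by (field; repeat split; intro; nra).
  assert (Hp: 0 < (/q+G)*(/q+S)) by nra.
  split. apply Rmult_le_pos; [lra| left; apply Rinv_0_lt_compat; lra].
  apply Rmult_le_compat_l; [lra|].
  replace (q^2) with (/(/q * /q)) by (rewrite Rinv_mult, !Rinv_inv; ring).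
  apply Rinv_le_contravar; nra.
Qed.

Lemma Cnorm2_nonneg z : 0 <= Cnorm2 z.
Proof. unfold Cnorm2; nra. Qed.

Lemma Cnorm2_pos z : Cnz z -> 0 < Cnorm2 z.
Proof. unfold Cnz, Cnorm2. destruct z as [p q]; simpl. intros H.
  destruct (Req_dec p 0); destruct (Req_dec q 0); subst; try (exfalso; apply H; reflexivity); nra.
Qed.

Lemma Cnorm2_conjmul u v : Cnorm2 (Cconjmul u v) = Cnorm2 u * Cnorm2 v.
Proof. destruct u, v; unfold Cnorm2, Cconjmul; simpl; ring. Qed.

Lemma Rpower_pos' x y : 0 < Rpower x y.
Proof. unfold Rpower; apply exp_pos. Qed.

Lemma term_lt c s m x : 0 < c -> 0 < s -> 1 <= m -> 0 <= x -> m * x / (c + s * m * x) < / s.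
Proof. intros. assert (0 <= s*m*x) by (repeat apply Rmult_le_pos; lra). assert (0 < c + s*m*x) by lra.
  replace (m*x/(c+s*m*x)) with (/s - c/(s*(c+s*m*x))) by (field; repeat split; intro; nra).
  assert (0 < c/(s*(c+s*m*x))) by (apply divspos; nra). lra. Qed.

Lemma term_nonneg c s m x : 0 < c -> 0 < s -> 1 <= m -> 0 <= x -> 0 <= m * x / (c + s * m * x).
Proof. intros. assert (0 <= s*m*x) by (repeat apply Rmult_le_pos; lra). apply divpos; [apply Rmult_le_pos|]; lra. Qed.

Lemma term_gap c s m t : 0 < c -> 0 < s -> 1 <= m -> 0 < t -> / s - m * t / (c + s * m * t) <= c / (s^2 * t).
Proof. intros. assert (0 <= s*m*t) by (repeat apply Rmult_le_pos; lra). assert (0 < c + s*m*t) by lra.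
  replace (/s - m*t/(c+s*m*t)) with (c/(s*(c+s*m*t))) by (field; repeat split; intro; nra).
  assert (0 < s*c) by (apply Rmult_lt_0_compat; lra).
  assert (0 <= s*s*t*(m-1)) by (repeat apply Rmult_le_pos; lra).
  assert (0 < s^2*t) by (apply Rmult_lt_0_compat; [apply pow_lt|]; lra).
  apply div_le; [apply Rmult_lt_0_compat; lra | lra |].
  assert (s^2*t <= s*(c+s*m*t)).
  { replace (s*(c+s*m*t)) with (s^2*t + (s*c + s*s*t*(m-1))) by ring. lra. }
  apply Rmult_le_compat_l; lra. Qed.

Lemma term_mono c s m x k : 0 < c -> 0 < s -> 1 <= m -> 0 <= x -> 1 <= k ->
  m * x / (c + s * m * x) <= m * (k * x) / (c + s * m * (k * x)).
Proof. intros. assert (0 <= s*m*x) by (repeat apply Rmult_le_pos; lra).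
  assert (0 <= s*m*(k*x)) by (repeat apply Rmult_le_pos; lra).
  apply div_le; try lra.
  assert (0 <= m*x*c*(k-1)) by (repeat apply Rmult_le_pos; lra). nra. Qed.

Lemma INR_M1 M : (1 <= M)%nat -> 1 <= INR M.
Proof. intros. change 1 with (INR 1). apply le_INR; lia. Qed.

Lemma gM_bounds sn alpha N sv d M x : 0 < sn -> (1 <= M)%nat ->
  (forall i, (i<N)%nat -> 0 < sv i) -> (forall i, (i<N)%nat -> 0 <= x i) ->
  0 <= gM sn alpha N sv d M x <= rsum N (fun i => / sv i).
Proof. intros Hsn HM Hsv Hx. pose proof (INR_M1 M HM). unfold gM. split.
  - apply rsum_nonneg; intros i Hi. apply term_nonneg; auto.
    apply Rmult_lt_0_compat; auto using Rpower_pos'.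
  - apply rsum_le; intros i Hi. left; apply term_lt; auto.
    apply Rmult_lt_0_compat; auto using Rpower_pos'.
Qed.

Definition GMset sn alpha N sv d M P := fun y => exists x : nat -> R,
   (forall i, (i < N)%nat -> 0 <= x i) /\ rsum N x = P /\ y = gM sn alpha N sv d M x.

Lemma GM_lub sn alpha N sv d M P : 0 < sn -> (1<=M)%nat -> (1<=N)%nat ->
  (forall i, (i<N)%nat -> 0 < sv i) -> 0 <= P ->
  is_lub (GMset sn alpha N sv d M P) (GM sn alpha N sv d M P).
Proof. intros. unfold GM. apply (Rsup_lub _ (gM sn alpha N sv d M (fun _ => P / INR N)) (rsum N (fun i => / sv i))).
  - exists (fun _ => P / INR N). assert (0 < INR N) by (apply lt_0_INR; lia).
    split; [intros; apply divpos; lra|]. split; auto. rewrite rsum_const. field. lra.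
  - intros y [x [Hx [_ ->]]]. apply gM_bounds; auto.
Qed.

Lemma GM_facts sn alpha N sv d M P : 0 < sn -> (1<=M)%nat -> (1<=N)%nat ->
  (forall i, (i<N)%nat -> 0 < sv i) -> 0 <= P ->
  gM sn alpha N sv d M (fun _ => P / INR N) <= GM sn alpha N sv d M P
  /\ GM sn alpha N sv d M P <= rsum N (fun i => / sv i)
  /\ 0 <= GM sn alpha N sv d M P.
Proof. intros. pose proof (GM_lub sn alpha N sv d M P) as [Hub Hl]; auto.
  assert (0 < INR N) by (apply lt_0_INR; lia).
  assert (Hg1: gM sn alpha N sv d M (fun _ => P / INR N) <= GM sn alpha N sv d M P).
  { apply Hub. exists (fun _ => P / INR N). split; [intros; apply divpos; lra|]. split; auto.
    rewrite rsum_const. field. lra. }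
  split; auto. split.
  - apply Hl. intros y [x [Hx [_ ->]]]. apply gM_bounds; auto.
  - eapply Rle_trans; [|exact Hg1]. apply gM_bounds; auto. intros; apply divpos; lra.
Qed.

Lemma GM_mono sn alpha N sv d M P1 P2 : 0 < sn -> (1<=M)%nat -> (1<=N)%nat ->
  (forall i, (i<N)%nat -> 0 < sv i) -> 0 < P1 -> P1 <= P2 ->
  GM sn alpha N sv d M P1 <= GM sn alpha N sv d M P2.
Proof. intros Hsn HM HN Hsv HP1 HP12.
  pose proof (GM_lub sn alpha N sv d M P1) as [_ Hl]; auto; try lra.
  pose proof (GM_lub sn alpha N sv d M P2) as [Hub _]; auto; try lra.
  pose proof (INR_M1 M HM).
  apply Hl. intros y [x [Hx [Hs ->]]].
  set (k := P2 / P1). assert (Hk: 1 <= k).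
  { unfold k. apply (Rmult_le_reg_r P1); auto. field_simplify; lra. }
  apply Rle_trans with (gM sn alpha N sv d M (fun i => k * x i)).
  - unfold gM. apply rsum_le. intros i Hi. apply term_mono; auto.
    apply Rmult_lt_0_compat; auto using Rpower_pos'.
  - apply Hub. exists (fun i => k * x i). split.
    + intros i Hi; apply Rmult_le_pos; [lra | auto].
    + split; auto. rewrite rsum_scal, Hs. unfold k. field. lra.
Qed.

Lemma GM_conv sn alpha N sv d M P : 0 < sn -> (1<=M)%nat -> (1<=N)%nat ->
  (forall i, (i<N)%nat -> 0 < sv i) -> 0 < P ->
  rsum N (fun i => / sv i) - GM sn alpha N sv d M P
   <= rsum N (fun i => sn * Rpower (d i) alpha / (sv i ^ 2)) * INR N / P.
Proof. intros Hsn HM HN Hsv HP.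
  destruct (GM_facts sn alpha N sv d M P) as [H1 _]; auto; try lra.
  pose proof (INR_M1 M HM).
  assert (0 < INR N) by (apply lt_0_INR; lia).
  assert (Ht: 0 < P / INR N) by (apply divspos; lra).
  apply Rle_trans with (rsum N (fun i => / sv i) - gM sn alpha N sv d M (fun _ => P / INR N)); [lra|].
  unfold gM. rewrite <- rsum_minus.
  apply Rle_trans with (rsum N (fun i => sn * Rpower (d i) alpha / (sv i ^ 2 * (P / INR N)))).
  - apply rsum_le. intros i Hi. apply term_gap; auto.
    apply Rmult_lt_0_compat; auto using Rpower_pos'.
  - right. replace (rsum N (fun i => sn * Rpower (d i) alpha / sv i ^ 2) * INR N / P) with
       ((INR N / P) * rsum N (fun i => sn * Rpower (d i) alpha / sv i ^ 2)) by (field; lra).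
    rewrite <- rsum_scal. apply rsum_ext. intros i Hi. specialize (Hsv i Hi). field. repeat split; lra.
Qed.

Lemma div_le_r a b c : 0 < b -> a <= c * b -> a / b <= c.
Proof. intros Hb H. unfold Rdiv. apply (Rmult_le_reg_r b); auto.
  rewrite Rmult_assoc, Rinv_l by lra. lra. Qed.

Definition Sset sth sn N sv P h := fun y => exists a : nat -> Cpx,
  rsum N (fun i => Cnorm2 (a i)) = P /\ y = rho sth sn N sv h a.

Lemma Dsum_nonneg N sv h (a : nat -> Cpx) : (forall i, (i<N)%nat -> 0 < sv i) ->
  0 <= rsum N (fun i => Cnorm2 (a i) * Cnorm2 (h i) * sv i).
Proof. intros Hsv. apply rsum_nonneg. intros i Hi. specialize (Hsv i Hi).
  pose proof (Cnorm2_nonneg (a i)). pose proof (Cnorm2_nonneg (h i)).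
  repeat apply Rmult_le_pos; lra. Qed.

Lemma rho_nonneg sth sn N sv h a : 0 < sth -> 0 < sn -> (forall i, (i<N)%nat -> 0 < sv i) ->
  0 <= rho sth sn N sv h a.
Proof. intros. unfold rho. pose proof (Dsum_nonneg N sv h a H1).
  apply divpos; [apply Rmult_le_pos; [lra|apply Cnorm2_nonneg]|lra]. Qed.

Lemma rho_floor sth sn N sv h a : 0 < sth -> 0 < sn -> (forall i, (i<N)%nat -> 0 < sv i) ->
  rho sth sn N sv h a <= sth * rsum N (fun i => / sv i).
Proof. intros Hsth Hsn Hsv. unfold rho.
  pose proof (Dsum_nonneg N sv h a Hsv) as HD.
  set (D := rsum N (fun i => Cnorm2 (a i) * Cnorm2 (h i) * sv i)) in *.
  set (S := rsum N (fun i => / sv i)).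
  assert (HS: 0 <= S) by (apply rsum_nonneg; intros i Hi; left; apply Rinv_0_lt_compat; auto).
  assert (Hw: forall i, (i<N)%nat -> 0 < / sv i) by (intros; apply Rinv_0_lt_compat; auto).
  pose proof (cs_cpx N (fun i => Cconjmul (h i) (a i)) (fun i => / sv i) Hw) as Hc.
  change (Cnorm2 (Cinner N h a) <= rsum N (fun i => Cnorm2 (Cconjmul (h i) (a i)) / / sv i) * S) in Hc.
  assert (E: rsum N (fun i => Cnorm2 (Cconjmul (h i) (a i)) / / sv i) = D).
  { apply rsum_ext. intros i Hi. rewrite Cnorm2_conjmul. specialize (Hsv i Hi). field. lra. }
  rewrite E in Hc. pose proof (Cnorm2_nonneg (Cinner N h a)).
  apply div_le_r; [lra|].
  assert (sth*Cnorm2 (Cinner N h a) <= sth*(D*S)) by (apply Rmult_le_compat_l; lra).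
  assert (0 <= sth*S*sn) by (repeat apply Rmult_le_pos; lra).
  replace (sth*S*(D+sn)) with (sth*(D*S) + sth*S*sn) by ring. lra.
Qed.

Lemma rho_zeta sth sn N sv h a : 0 < sth -> 0 < sn -> (forall i, (i<N)%nat -> 0 < sv i) ->
  (forall i, (i<N)%nat -> Cnz (h i)) ->
  rho sth sn N sv h a <= sth * rsum N (fun i => Cnorm2 (a i)) * rsum N (fun i => Cnorm2 (h i)) / sn.
Proof. intros Hsth Hsn Hsv Hh. unfold rho.
  pose proof (Dsum_nonneg N sv h a Hsv) as HD.
  set (D := rsum N (fun i => Cnorm2 (a i) * Cnorm2 (h i) * sv i)) in *.
  assert (Hw: forall i, (i<N)%nat -> 0 < Cnorm2 (h i)) by (intros; apply Cnorm2_pos; auto).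
  pose proof (cs_cpx N (fun i => Cconjmul (h i) (a i)) (fun i => Cnorm2 (h i)) Hw) as Hc.
  change (Cnorm2 (Cinner N h a) <= rsum N (fun i => Cnorm2 (Cconjmul (h i) (a i)) / Cnorm2 (h i)) * rsum N (fun i => Cnorm2 (h i))) in Hc.
  assert (E: rsum N (fun i => Cnorm2 (Cconjmul (h i) (a i)) / Cnorm2 (h i)) = rsum N (fun i => Cnorm2 (a i))).
  { apply rsum_ext. intros i Hi. rewrite Cnorm2_conjmul. specialize (Hw i Hi). field. lra. }
  rewrite E in Hc. pose proof (Cnorm2_nonneg (Cinner N h a)) as Hn.
  set (n := Cnorm2 (Cinner N h a)) in *.
  set (AH := rsum N (fun i => Cnorm2 (a i)) * rsum N (fun i => Cnorm2 (h i))) in *.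
  replace (sth * rsum N (fun i => Cnorm2 (a i)) * rsum N (fun i => Cnorm2 (h i))) with (sth * AH) by (unfold AH; ring).
  apply div_le; [lra|lra|].
  assert (sth*n*sn <= sth*AH*sn) by (apply Rmult_le_compat_r; [lra| apply Rmult_le_compat_l; lra]).
  assert (0 <= AH) by lra.
  assert (0 <= sth*AH*D) by (apply Rmult_le_pos; [apply Rmult_le_pos|]; lra).
  replace (sth*AH*(D+sn)) with (sth*AH*sn + sth*AH*D) by ring. lra.
Qed.

Lemma witness sth sn N sv h P : 0 < sth -> 0 < sn -> (1<=N)%nat ->
  (forall i, (i<N)%nat -> 0 < sv i) -> (forall i, (i<N)%nat -> Cnz (h i)) -> 0 <= P ->
  exists a, rsum N (fun i => Cnorm2 (a i)) = P /\
     rho sth sn N sv h a =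
       sth * (P / rsum N (fun i => / (Cnorm2 (h i) * sv i ^ 2)) * rsum N (fun i => / sv i) * rsum N (fun i => / sv i))
       / (P / rsum N (fun i => / (Cnorm2 (h i) * sv i ^ 2)) * rsum N (fun i => / sv i) + sn).
Proof. intros Hsth Hsn HN Hsv Hh HP.
  set (K := rsum N (fun i => / (Cnorm2 (h i) * sv i ^ 2))).
  set (S := rsum N (fun i => / sv i)).
  assert (Hhp: forall i, (i<N)%nat -> 0 < Cnorm2 (h i)) by (intros; apply Cnorm2_pos; auto).
  assert (HK: 0 < K).
  { apply rsum_pos; auto. intros i Hi. apply Rinv_0_lt_compat. specialize (Hhp i Hi). specialize (Hsv i Hi).
    apply Rmult_lt_0_compat; [lra| apply pow_lt; lra]. }
  set (t := sqrt (P / K)).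
  assert (Ht: t * t = P / K) by (apply sqrt_sqrt; apply divpos; lra).
  assert (Ha: forall i, (i<N)%nat ->
     Cnorm2 (t * fst (h i) / (Cnorm2 (h i) * sv i), t * snd (h i) / (Cnorm2 (h i) * sv i))
       = (t * t) * / (Cnorm2 (h i) * sv i ^ 2)).
  { intros i Hi. specialize (Hhp i Hi). specialize (Hsv i Hi). unfold Cnorm2 in *.
    destruct (h i) as [p q]. simpl in *. field. split; intro; nra. }
  assert (Hc: forall i, (i<N)%nat ->
     Cconjmul (h i) (t * fst (h i) / (Cnorm2 (h i) * sv i), t * snd (h i) / (Cnorm2 (h i) * sv i))
       = (t * / sv i, 0)).
  { intros i Hi. specialize (Hhp i Hi). specialize (Hsv i Hi). unfold Cnorm2, Cconjmul in *.
    destruct (h i) as [p q]. simpl in *. f_equal; field; split; intro; nra. }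
  set (a := fun i => (t * fst (h i) / (Cnorm2 (h i) * sv i), t * snd (h i) / (Cnorm2 (h i) * sv i))).
  exists a.
  assert (E1: rsum N (fun i => fst (Cconjmul (h i) (a i))) = t * S).
  { unfold S. rewrite <- rsum_scal. apply rsum_ext. intros i Hi. unfold a. rewrite (Hc i Hi). reflexivity. }
  assert (E2: rsum N (fun i => snd (Cconjmul (h i) (a i))) = 0 * S).
  { unfold S. rewrite <- rsum_scal. apply rsum_ext. intros i Hi. unfold a. rewrite (Hc i Hi). simpl. ring. }
  assert (E3: rsum N (fun i => Cnorm2 (a i) * Cnorm2 (h i) * sv i) = (t*t) * S).
  { unfold S. rewrite <- rsum_scal. apply rsum_ext. intros i Hi. unfold a. rewrite (Ha i Hi).
    specialize (Hhp i Hi). specialize (Hsv i Hi). field. lra. }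
  assert (E4: rsum N (fun i => Cnorm2 (a i)) = (t*t) * K).
  { unfold K. rewrite <- rsum_scal. apply rsum_ext. intros i Hi. unfold a. apply (Ha i Hi). }
  split.
  - rewrite E4, Ht. field. lra.
  - unfold rho, Cinner. rewrite E1, E2, E3. unfold Cnorm2. simpl.
    replace (t * S * (t * S) + 0 * S * (0 * S)) with (t * t * S * S) by ring.
    rewrite Ht. reflexivity.
Qed.

Lemma div_lt_r a b c : 0 < b -> a < c * b -> a / b < c.
Proof. intros Hb H. unfold Rdiv. apply (Rmult_lt_reg_r b); auto.
  rewrite Rmult_assoc, Rinv_l by lra. lra. Qed.

Lemma Ssnr_lub sth sn N sv h P : 0 < sth -> 0 < sn -> (1<=N)%nat ->
  (forall i, (i<N)%nat -> 0 < sv i) -> (forall i, (i<N)%nat -> Cnz (h i)) -> 0 <= P ->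
  is_lub (Sset sth sn N sv P h) (Ssnr sth sn N sv P h).
Proof. intros. destruct (witness sth sn N sv h P) as [a [Ha _]]; auto.
  unfold Ssnr. apply (Rsup_lub _ (rho sth sn N sv h a) (sth * rsum N (fun i => / sv i))).
  - exists a; auto.
  - intros y [b [_ ->]]. apply rho_floor; auto.
Qed.

Lemma Ssnr_facts sth sn N sv h P : 0 < sth -> 0 < sn -> (1<=N)%nat ->
  (forall i, (i<N)%nat -> 0 < sv i) -> (forall i, (i<N)%nat -> Cnz (h i)) -> 0 <= P ->
  sth * (P / rsum N (fun i => / (Cnorm2 (h i) * sv i ^ 2)) * rsum N (fun i => / sv i) * rsum N (fun i => / sv i))
       / (P / rsum N (fun i => / (Cnorm2 (h i) * sv i ^ 2)) * rsum N (fun i => / sv i) + sn)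
     <= Ssnr sth sn N sv P h
  /\ Ssnr sth sn N sv P h <= sth * rsum N (fun i => / sv i)
  /\ 0 <= Ssnr sth sn N sv P h
  /\ 0 < rsum N (fun i => / (Cnorm2 (h i) * sv i ^ 2))
  /\ 0 < rsum N (fun i => / sv i).
Proof. intros Hsth Hsn HN Hsv Hh HP.
  destruct (Ssnr_lub sth sn N sv h P) as [Hub Hl]; auto.
  destruct (witness sth sn N sv h P) as [a [Ha Hr]]; auto.
  assert (Hra: rho sth sn N sv h a <= Ssnr sth sn N sv P h) by (apply Hub; exists a; auto).
  rewrite <- Hr. split; auto. split.
  - apply Hl. intros y [b [_ ->]]. apply rho_floor; auto.
  - split. pose proof (rho_nonneg sth sn N sv h a Hsth Hsn Hsv). lra.
    split.
    + apply rsum_pos; auto. intros i Hi. apply Rinv_0_lt_compat.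
      pose proof (Cnorm2_pos _ (Hh i Hi)). specialize (Hsv i Hi).
      apply Rmult_lt_0_compat; [lra| apply pow_lt; lra].
    + apply rsum_pos; auto. intros; apply Rinv_0_lt_compat; auto.
Qed.

Lemma Ssnr_mono sth sn N sv h P1 P2 : 0 < sth -> 0 < sn -> (1<=N)%nat ->
  (forall i, (i<N)%nat -> 0 < sv i) -> (forall i, (i<N)%nat -> Cnz (h i)) -> 0 < P1 -> P1 <= P2 ->
  Ssnr sth sn N sv P1 h <= Ssnr sth sn N sv P2 h.
Proof. intros Hsth Hsn HN Hsv Hh HP1 HP12.
  destruct (Ssnr_lub sth sn N sv h P1) as [_ Hl]; auto; try lra.
  destruct (Ssnr_lub sth sn N sv h P2) as [Hub _]; auto; try lra.
  apply Hl. intros y [a [Ha ->]].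
  set (k := sqrt (P2 / P1)).
  assert (Hk: k * k = P2 / P1) by (apply sqrt_sqrt; apply divpos; lra).
  assert (Hk1: 1 <= k * k).
  { rewrite Hk. apply (Rmult_le_reg_r P1); auto. field_simplify; lra. }
  set (a' := fun i => (k * fst (a i), k * snd (a i))).
  assert (E1: rsum N (fun i => Cnorm2 (a' i)) = k*k * rsum N (fun i => Cnorm2 (a i))).
  { rewrite <- rsum_scal. apply rsum_ext. intros; unfold a', Cnorm2; simpl; ring. }
  assert (E2: rsum N (fun i => fst (Cconjmul (h i) (a' i))) = k * rsum N (fun i => fst (Cconjmul (h i) (a i)))).
  { rewrite <- rsum_scal. apply rsum_ext. intros; unfold a', Cconjmul; simpl; ring. }
  assert (E3: rsum N (fun i => snd (Cconjmul (h i) (a' i))) = k * rsum N (fun i => snd (Cconjmul (h i) (a i)))).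
  { rewrite <- rsum_scal. apply rsum_ext. intros; unfold a', Cconjmul; simpl; ring. }
  assert (E4: rsum N (fun i => Cnorm2 (a' i) * Cnorm2 (h i) * sv i) = k*k * rsum N (fun i => Cnorm2 (a i) * Cnorm2 (h i) * sv i)).
  { rewrite <- rsum_scal. apply rsum_ext. intros; unfold a', Cnorm2; simpl; ring. }
  apply Rle_trans with (rho sth sn N sv h a').
  - unfold rho, Cinner. rewrite E2, E3, E4.
    pose proof (Dsum_nonneg N sv h a Hsv) as HD.
    set (D := rsum N (fun i => Cnorm2 (a i) * Cnorm2 (h i) * sv i)) in *.
    set (X := rsum N (fun i => fst (Cconjmul (h i) (a i)))).
    set (Y := rsum N (fun i => snd (Cconjmul (h i) (a i)))).
    unfold Cnorm2; simpl.
    assert (0 <= X*X+Y*Y) by nra.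
    assert (0 <= k*k*D) by (apply Rmult_le_pos; lra).
    apply div_le; [lra|lra|].
    assert (0 <= sth*(X*X+Y*Y)*sn*(k*k-1)) by (repeat apply Rmult_le_pos; lra).
    replace (sth * (X * X + Y * Y) * (k * k * D + sn)) with
      (sth*(X*X+Y*Y)*(k*k)*D + sth*(X*X+Y*Y)*sn) by ring.
    replace (sth * (k * X * (k * X) + k * Y * (k * Y)) * (D + sn)) with
      (sth*(X*X+Y*Y)*(k*k)*D + sth*(X*X+Y*Y)*sn + sth*(X*X+Y*Y)*sn*(k*k-1)) by ring.
    lra.
  - apply Hub. exists a'. split; auto. rewrite E1, Ha, Hk. field. lra.
Qed.

Lemma Ssnr_conv sth sn N sv h P : 0 < sth -> 0 < sn -> (1<=N)%nat ->
  (forall i, (i<N)%nat -> 0 < sv i) -> (forall i, (i<N)%nat -> Cnz (h i)) -> 0 < P ->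
  sth * rsum N (fun i => / sv i) - Ssnr sth sn N sv P h
    <= sth * sn * rsum N (fun i => / (Cnorm2 (h i) * sv i ^ 2)) / P.
Proof. intros Hsth Hsn HN Hsv Hh HP.
  destruct (Ssnr_facts sth sn N sv h P) as [H1 [_ [_ [HK HS]]]]; auto; try lra.
  set (K := rsum N (fun i => / (Cnorm2 (h i) * sv i ^ 2))) in *.
  set (S := rsum N (fun i => / sv i)) in *.
  set (T := P / K) in *.
  assert (HT: 0 < T) by (apply divspos; lra).
  assert (0 < T*S) by (apply Rmult_lt_0_compat; lra).
  assert (E: sth * S - sth * (T*S*S)/(T*S+sn) = sth*S*sn/(T*S+sn)) by (field; lra).
  assert (B: sth*S*sn/(T*S+sn) <= sth*sn*K/P).
  { replace (sth*sn*K/P) with (sth*sn/T) by (unfold T; field; lra).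
    apply div_le; [lra|lra|].
    assert (0 <= sth*sn*sn) by (repeat apply Rmult_le_pos; lra).
    replace (sth*sn*(T*S+sn)) with (sth*S*sn*T + sth*sn*sn) by ring. lra. }
  lra.
Qed.

Lemma mse_s_eq sth X : 0 < sth -> 0 <= X -> sth / (1 + X) = 1 / (/ sth + X / sth).
Proof. intros. field. split; lra. Qed.

Theorem corollary1 (sth sn alpha : R) (N : nat) (sv d : nat -> R)
  (Hsth : 0 < sth) (Hsn : 0 < sn) (Halpha : 0 < alpha) (HN : (1 <= N)%nat)
  (Hsv : forall i, (i < N)%nat -> 0 < sv i)
  (Hd : forall i, (i < N)%nat -> 0 < d i) :
  (* (a) *)
  (forall M : nat, (1 <= M)%nat ->
     MSE_M sth sn alpha N sv d M (PM sn alpha N sv d M)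
       <= 1 / (/ sth + 1 / 3 * rsum N (fun i => / sv i)))
  /\
  (* (b) *)
  (forall h : nat -> Cpx, (forall i, (i < N)%nat -> Cnz (h i)) ->
     forall M : nat, (1 <= M)%nat ->
       sth / (1 + zetaM sth alpha N sv d M h)
         <= MSE_s sth sn N sv (PM sn alpha N sv d M) h
       /\ MSE_s sth sn N sv (PM sn alpha N sv d M) h < sth)
  /\
  (forall h : nat -> Cpx, Un_cv (fun M => zetaM sth alpha N sv d M h) 0)
  /\
  (* (c) *)
  (forall M : nat, (1 <= M)%nat ->
     (forall P, 0 < P -> MSE_floor sth N sv <= MSE_M sth sn alpha N sv d M P)
     /\ (forall P1 P2, 0 < P1 -> P1 <= P2 ->
           MSE_M sth sn alpha N sv d M P2 <= MSE_M sth sn alpha N sv d M P1)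
     /\ (forall eps, 0 < eps -> exists P0, forall P, P0 <= P ->
           Rabs (MSE_M sth sn alpha N sv d M P - MSE_floor sth N sv) < eps))
  /\
  (forall h : nat -> Cpx, (forall i, (i < N)%nat -> Cnz (h i)) ->
     (forall P, 0 < P -> MSE_floor sth N sv <= MSE_s sth sn N sv P h)
     /\ (forall P1 P2, 0 < P1 -> P1 <= P2 ->
           MSE_s sth sn N sv P2 h <= MSE_s sth sn N sv P1 h)
     /\ (forall eps, 0 < eps -> exists P0, forall P, P0 <= P ->
           Rabs (MSE_s sth sn N sv P h - MSE_floor sth N sv) < eps)).
Proof.
  assert (Hc: forall i, (i<N)%nat -> 0 < sn * Rpower (d i) alpha)
    by (intros; apply Rmult_lt_0_compat; auto using Rpower_pos').
  assert (HS: 0 < rsum N (fun i => / sv i))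
    by (apply rsum_pos; auto; intros; apply Rinv_0_lt_compat; auto).
  assert (Hist: 0 < / sth) by (apply Rinv_0_lt_compat; lra).
  assert (HPM: forall M, (1<=M)%nat -> 0 < PM sn alpha N sv d M).
  { intros M HM. pose proof (INR_M1 M HM). unfold PM. apply Rmult_lt_0_compat.
    apply divspos; lra. apply rsum_pos; auto. intros i Hi. apply divspos; auto. }
  split; [|split; [|split; [|split]]].
  -
    intros M HM. pose proof (INR_M1 M HM) as Hm.
    destruct (GM_lub sn alpha N sv d M (PM sn alpha N sv d M)) as [Hub _]; auto;
      [left; auto|].
    set (x := fun i => sn * Rpower (d i) alpha / (2 * INR M * sv i)).
    assert (Hg: gM sn alpha N sv d M x = 1/3 * rsum N (fun i => / sv i)).
    { unfold gM. rewrite <- rsum_scal. apply rsum_ext. intros i Hi. unfold x.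
      specialize (Hc i Hi); specialize (Hsv i Hi).
      set (c := sn * Rpower (d i) alpha) in *. field. repeat split; intro; nra. }
    assert (Hge: 1/3 * rsum N (fun i => / sv i) <= GM sn alpha N sv d M (PM sn alpha N sv d M)).
    { rewrite <- Hg. apply Hub. exists x. split.
      - intros i Hi. unfold x. left. apply divspos; auto.
        specialize (Hsv i Hi). apply Rmult_lt_0_compat; lra.
      - split; auto. unfold PM. rewrite <- rsum_scal. apply rsum_ext. intros i Hi. unfold x.
        specialize (Hsv i Hi). field. lra. }
    unfold MSE_M. apply div_le; lra.
  -
    intros h Hh M HM. pose proof (INR_M1 M HM) as Hm.
    pose proof (HPM M HM) as HP.
    destruct (Ssnr_facts sth sn N sv h (PM sn alpha N sv d M)) as [H1 [_ [_ [HK _]]]]; auto; try lra.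
    destruct (Ssnr_lub sth sn N sv h (PM sn alpha N sv d M)) as [_ Hl]; auto; try lra.
    assert (Hpos: 0 < Ssnr sth sn N sv (PM sn alpha N sv d M) h).
    { eapply Rlt_le_trans; [|exact H1]. 
      set (T := PM sn alpha N sv d M / rsum N (fun i => / (Cnorm2 (h i) * sv i ^ 2))).
      assert (0 < T) by (apply divspos; lra).
      assert (0 < T * rsum N (fun i => / sv i)) by (apply Rmult_lt_0_compat; lra).
      apply divspos; [|lra]. apply Rmult_lt_0_compat; [lra|]. apply Rmult_lt_0_compat; lra. }
    assert (Hz: Ssnr sth sn N sv (PM sn alpha N sv d M) h <= zetaM sth alpha N sv d M h).
    { apply Hl. intros y [a [Ha ->]]. eapply Rle_trans; [apply rho_zeta; auto|].
      rewrite Ha. right. unfold zetaM, PM.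
      rewrite (rsum_ext N (fun i => sth * Rpower (d i) alpha / sv i)
                 (fun i => (sth/sn) * (sn * Rpower (d i) alpha / sv i))).
      2:{ intros i Hi. specialize (Hsv i Hi). field. split; lra. }
      rewrite rsum_scal. field. split; lra. }
    unfold MSE_s. split.
    + apply div_le; [lra|lra|apply Rmult_le_compat_l; lra].
    + set (X := Ssnr sth sn N sv (PM sn alpha N sv d M) h) in *.
      assert (E: sth / (1 + X) = sth - sth * X / (1 + X)) by (field; lra).
      assert (0 < sth * X / (1 + X)) by (apply divspos; [apply Rmult_lt_0_compat|]; lra).
      lra.
  -
    intros h eps He.
    set (A := rsum N (fun i => Cnorm2 (h i))).
    set (B := rsum N (fun i => sth * Rpower (d i) alpha / sv i)).
    pose proof (Rabs_pos (A*B)) as HAB.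
    destruct (archimed_cor1 (eps/(Rabs(A*B)+1))) as [N0 [HN0 HN0p]].
    { apply divspos; lra. }
    exists N0. intros n Hn. unfold R_dist, zetaM. fold A B.
    assert (HN0r: 0 < INR N0) by (apply lt_0_INR; lia).
    assert (Hnr: INR N0 <= INR n) by (apply le_INR; lia).
    rewrite Rminus_0_r.
    replace (A / (2 * INR n) * B) with ((A*B) * / (2 * INR n)) by (field; lra).
    rewrite Rabs_mult, (Rabs_pos_eq (/ (2 * INR n))) by (left; apply Rinv_0_lt_compat; lra).
    assert (I1: / (2 * INR n) <= / INR N0) by (apply Rinv_le_contravar; lra).
    assert (Q: Rabs(A*B) * (eps/(Rabs(A*B)+1)) < eps).
    { replace (Rabs(A*B) * (eps/(Rabs(A*B)+1))) with (eps - eps/(Rabs(A*B)+1)) by (field; lra).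
      assert (0 < eps/(Rabs(A*B)+1)) by (apply divspos; lra). lra. }
    assert (Rabs (A*B) * / (2 * INR n) <= Rabs (A*B) * (eps/(Rabs(A*B)+1))).
    { apply Rmult_le_compat_l; lra. }
    lra.
  -
    intros M HM. split; [|split].
    + intros P HP. destruct (GM_facts sn alpha N sv d M P) as [_ [H2 H3]]; auto; try lra.
      unfold MSE_M, MSE_floor.
      pose proof (inv_gap sth _ _ Hsth H3 H2). lra.
    + intros P1 P2 HP1 HP12.
      destruct (GM_facts sn alpha N sv d M P1) as [_ [_ H3]]; auto; try lra.
      pose proof (GM_mono sn alpha N sv d M P1 P2 Hsn HM HN Hsv HP1 HP12).
      unfold MSE_M. apply div_le; lra.
    + intros eps He.
      set (K := rsum N (fun i => sn * Rpower (d i) alpha / (sv i ^ 2))).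
      assert (HK: 0 <= K).
      { apply rsum_nonneg. intros i Hi. apply divpos; [left; auto|]. apply pow_lt; auto. }
      assert (HNr: 0 < INR N) by (apply lt_0_INR; lia).
      set (X := sth^2 * K * INR N).
      assert (HX: 0 <= X) by (unfold X; repeat apply Rmult_le_pos; try lra; apply pow_le; lra).
      exists (X / eps + 1). intros P HP.
      assert (HXe: 0 <= X / eps) by (apply divpos; lra).
      assert (HPp: 0 < P) by lra.
      assert (HeP: X < eps * P).
      { assert (eps * (X/eps) < eps * P) by (apply Rmult_lt_compat_l; lra).
        replace (eps * (X/eps)) with X in * by (field; lra). lra. }
      destruct (GM_facts sn alpha N sv d M P) as [_ [H2 H3]]; auto; try lra.
      pose proof (GM_conv sn alpha N sv d M P Hsn HM HN Hsv HPp) as Hcv. fold K in Hcv.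
      unfold MSE_M, MSE_floor.
      pose proof (inv_gap sth _ _ Hsth H3 H2) as [G1 G2].
      rewrite Rabs_pos_eq by lra.
      assert (0 < sth^2) by (apply pow_lt; lra).
      assert ((rsum N (fun i => / sv i) - GM sn alpha N sv d M P) * sth^2 <= K * INR N / P * sth^2)
        by (apply Rmult_le_compat_r; lra).
      assert (K * INR N / P * sth^2 < eps).
      { replace (K * INR N / P * sth^2) with (X / P) by (unfold X; field; lra).
        apply div_lt_r; lra. }
      lra.
  -
    intros h Hh. split; [|split].
    + intros P HP.
      destruct (Ssnr_facts sth sn N sv h P) as [_ [H2 [H3 _]]]; auto; try lra.
      unfold MSE_s, MSE_floor. rewrite mse_s_eq by auto.
      assert (0 <= Ssnr sth sn N sv P h / sth) by (apply divpos; lra).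
      assert (Ssnr sth sn N sv P h / sth <= rsum N (fun i => / sv i)).
      { apply div_le_r; lra. }
      pose proof (inv_gap sth _ _ Hsth H H0). lra.
    + intros P1 P2 HP1 HP12.
      destruct (Ssnr_facts sth sn N sv h P1) as [_ [_ [H3 _]]]; auto; try lra.
      pose proof (Ssnr_mono sth sn N sv h P1 P2 Hsth Hsn HN Hsv Hh HP1 HP12).
      unfold MSE_s. apply div_le; nra.
    + intros eps He.
      set (K := rsum N (fun i => / (Cnorm2 (h i) * sv i ^ 2))).
      destruct (Ssnr_facts sth sn N sv h 1) as [_ [_ [_ [HK _]]]]; auto; try lra.
      fold K in HK.
      set (X := sth * (sth * sn * K)).
      assert (HX: 0 <= X) by (unfold X; repeat apply Rmult_le_pos; lra).
      exists (X / eps + 1). intros P HP.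
      assert (HXe: 0 <= X / eps) by (apply divpos; lra).
      assert (HPp: 0 < P) by lra.
      assert (HeP: X < eps * P).
      { assert (eps * (X/eps) < eps * P) by (apply Rmult_lt_compat_l; lra).
        replace (eps * (X/eps)) with X in * by (field; lra). lra. }
      destruct (Ssnr_facts sth sn N sv h P) as [_ [H2 [H3 _]]]; auto; try lra.
      pose proof (Ssnr_conv sth sn N sv h P Hsth Hsn HN Hsv Hh HPp) as Hcv. fold K in Hcv.
      unfold MSE_s, MSE_floor. rewrite mse_s_eq by auto.
      assert (G0: 0 <= Ssnr sth sn N sv P h / sth) by (apply divpos; lra).
      assert (G3: Ssnr sth sn N sv P h / sth <= rsum N (fun i => / sv i)).
      { apply div_le_r; lra. }
      pose proof (inv_gap sth _ _ Hsth G0 G3) as [G1 G2].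
      rewrite Rabs_pos_eq by lra.
      assert (E: (rsum N (fun i => / sv i) - Ssnr sth sn N sv P h / sth) * sth^2
                 = (sth * rsum N (fun i => / sv i) - Ssnr sth sn N sv P h) * sth) by (field; lra).
      assert ((sth * rsum N (fun i => / sv i) - Ssnr sth sn N sv P h) * sth <= sth * sn * K / P * sth)
        by (apply Rmult_le_compat_r; lra).
      assert (sth * sn * K / P * sth < eps).
      { replace (sth * sn * K / P * sth) with (X / P) by (unfold X; field; lra).
        apply div_lt_r; lra. }
      lra.
Qed.
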